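(* For integers $i\ge0$, $j\ge0$ and real $k_1,k_2$, $$\sum_{r=j}^{i}\frac{1}{r!}\,b_{i,r,k_1}\,c_{r,j,k_2}=\binom{i}{j}(k_1-k_2)^{i-j}.$$
   Context: For integers $i\ge0$, $j\ge0$ and real $k$, $b_{i,j,k}=\sum_{r=0}^{j}\binom{j}{r}(-1)^{j-r}(r+k)^i$, with the convention $0^0=1$. The (signed) Stirling numbers of the first kind $s_{i,j}$ ($i,j\ge0$) are defined by $s_{0,0}=1$, $s_{0,j}=0$ for $j>0$, $s_{i,0}=0$ for $i>0$, and $s_{i+1,j}=s_{i,j-1}-i\,s_{i,j}$ for $i\ge0$, $j>0$. For integers $i,j\ge0$ and real $k$, $c_{i,j,k}=\sum_{r=j}^{i}\binom{r}{j}(-k)^{r-j}s_{i,r}$ (with $0^0=1$). An empty sum (when $i<j$) equals $0$, as does $\binom{i}{j}$ for $i<j$. *)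

(* Defs.v *)
From mathcomp Require Import all_boot all_order all_algebra.
Set Implicit Arguments. Unset Strict Implicit. Unset Printing Implicit Defensive.
Import Order.TTheory GRing.Theory Num.Theory.
Local Open Scope ring_scope.

Fixpoint stirling1 (i j : nat) : int :=
  match i, j with
  | 0%N, 0%N => 1
  | 0%N, _.+1 => 0
  | _.+1, 0%N => 0
  | i'.+1, j'.+1 => stirling1 i' j' - (i'%:Z) * stirling1 i' j'.+1
  end.

(* b_{i,j,k} = sum_{r=0}^{j} C(j,r) (-1)^{j-r} (r+k)^i, with 0^0 = 1
   (x ^+ 0 = 1 in MathComp). *)
Definition bcoef {R : realFieldType} (i j : nat) (k : R) : R :=
  \sum_(0 <= r < j.+1) ('C(j, r))%:R * (-1) ^+ (j - r) * (r%:R + k) ^+ i.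

Definition ccoef {R : realFieldType} (i j : nat) (k : R) : R :=
  \sum_(j <= r < i.+1) ('C(r, j))%:R * (- k) ^+ (r - j) * (stirling1 i r)%:~R.

(* Main.v *)
Require Import Defs.
From mathcomp Require Import all_boot all_order all_algebra.
From mathcomp Require Import ring lra.
Set Implicit Arguments. Unset Strict Implicit. Unset Printing Implicit Defensive.
Import Order.TTheory GRing.Theory Num.Theory.
Local Open Scope ring_scope.

Section Aux.
Variable R : comRingType.

Definition bf (f : nat -> R) (r : nat) : R :=
  \sum_(0 <= t < r.+1) ('C(r, t))%:R * (-1) ^+ (r - t) * f t.

Lemma bfS f r : bf f r.+1 = bf (fun t => f t.+1) r - bf f r.
Proof.
rewrite /bf big_nat_recl // bin0 subn0.
have -> : \sum_(0 <= i < r.+1) 'C(r.+1, i.+1)%:R * (-1) ^+ (r.+1 - i.+1) * f i.+1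
  = \sum_(0 <= i < r.+1) 'C(r, i)%:R * (-1) ^+ (r - i) * f i.+1
  + \sum_(0 <= i < r.+1) 'C(r, i.+1)%:R * (-1) ^+ (r - i) * f i.+1.
  by rewrite -big_split /=; apply: eq_bigr => t _; rewrite binS subSS natrD; ring.
rewrite [in X in _ = _ - X]big_nat_recl // bin0 subn0.
rewrite [X in _ + (_ + X) = _](big_nat_recr r 0) //= (@bin_small r r.+1) // mul0r mul0r addr0.
have -> : \sum_(0 <= i < r) 'C(r, i.+1)%:R * (-1) ^+ (r - i) * f i.+1
  = - \sum_(0 <= i < r) 'C(r, i.+1)%:R * (-1) ^+ (r - i.+1) * f i.+1.
  rewrite -sumrN big_nat_cond [RHS]big_nat_cond; apply: eq_bigr => t /andP[/andP[_ ht] _].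
  by rewrite -(subnSK ht) exprS; ring.
rewrite exprS; ring.
Qed.

Lemma bf_inv n f : \sum_(0 <= r < n.+1) ('C(n, r))%:R * bf f r = f n.
Proof.
elim: n f => [|n IH] f.
  by rewrite big_nat1 /bf big_nat1 bin0 subnn expr0 !mul1r.
rewrite big_nat_recl // bin0 mul1r.
have -> : \sum_(0 <= i < n.+1) 'C(n.+1, i.+1)%:R * bf f i.+1
   = \sum_(0 <= i < n.+1) 'C(n, i)%:R * bf (fun t => f t.+1) i
   - \sum_(0 <= i < n.+1) 'C(n, i)%:R * bf f i
   + \sum_(0 <= i < n.+1) 'C(n, i.+1)%:R * bf f i.+1.
  rewrite -sumrB -big_split /=; apply: eq_bigr => t _; rewrite binS natrD bfS; ring.
rewrite !IH.
have : \sum_(0 <= r < n.+2) 'C(n, r)%:R * bf f r = f n.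
  by rewrite big_nat_recr //= bin_small // mul0r addr0 IH.
rewrite big_nat_recl // bin0 mul1r => H.
have -> : bf f 0 = f 0 by rewrite /bf big_nat1 bin0 subnn expr0 !mul1r.
rewrite -H /bf big_nat1 bin0 subnn expr0 !mul1r; ring.
Qed.

Lemma ff_bin n r : \prod_(0 <= t < r) (n%:R - t%:R : R) = ('C(n, r) * r`!)%:R.
Proof.
elim: r => [|r IH]; first by rewrite big_geq // bin0.
rewrite big_nat_recr //= IH factS mulnCA mulnA mul_bin_left.
case: (leqP r n) => h.
  by rewrite !natrM natrB //; ring.
by rewrite bin_small // !(muln0, mul0n, mul0r).
Qed.

Lemma stir0 r : (r%:R : R) * (stirling1 r 0)%:~R = 0.
Proof. by case: r => [|r] /=; rewrite ?mul0r ?mulr0. Qed.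

Lemma stir_big r m : (r < m)%N -> stirling1 r m = 0.
Proof.
elim: r m => [|r IH] [|m] //= h.
by rewrite !IH // ?mulr0 ?subr0 // ltnW.
Qed.

Lemma stirling_prod (Y : R) r :
  \prod_(0 <= t < r) (Y - t%:R) = \sum_(0 <= m < r.+1) (stirling1 r m)%:~R * Y ^+ m.
Proof.
elim: r => [|r IH]; first by rewrite big_geq // big_nat1 /= mul1r expr0.
rewrite big_nat_recr //= IH big_nat_recl //= mul0r add0r.
have -> : \sum_(0 <= i < r.+1) (stirling1 r i - r%:Z * stirling1 r i.+1)%:~R * Y ^+ i.+1
  = (\sum_(0 <= i < r.+1) (stirling1 r i)%:~R * Y ^+ i) * Y
  - r%:R * \sum_(0 <= i < r.+1) (stirling1 r i.+1)%:~R * Y ^+ i.+1.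
  rewrite mulr_suml mulr_sumr -sumrB; apply: eq_bigr => t _.
  rewrite intrB intrM exprS /=; ring.
have -> : \sum_(0 <= i < r.+1) (stirling1 r i.+1)%:~R * Y ^+ i.+1
  = \sum_(0 <= i < r.+1) (stirling1 r i)%:~R * Y ^+ i - (stirling1 r 0)%:~R.
  rewrite [in LHS](big_nat_recr r 0) //= [in RHS](big_nat_recl r 0) //= stir_big //.
  by rewrite mul0r addr0 expr0 mulr1; ring.
have := stir0 r => H.
rewrite (mulrBr (r%:R)) H subr0; ring.
Qed.

End Aux.
Lemma coef_XaddC_exp (R : comNzRingType) (c : R) n j :
  (('X + c%:P) ^+ n)`_j = ('C(n, j))%:R * c ^+ (n - j).
Proof.
rewrite addrC exprDn coef_sum.
under eq_bigr => k _ do rewrite coefMn -rmorphXn coefCM coefXn.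
case: (leqP j n) => h.
  rewrite (bigD1 (Ordinal (h : (j < n.+1)%N))) //= eqxx big1 ?addr0.
    by rewrite mulr1 mulr_natl.
  move=> k /eqP hk; case: eqP => [e|_]; last by rewrite mulr0 mul0rn.
  by exfalso; apply: hk; apply: val_inj; rewrite /= e.
rewrite bin_small // mul0r big1 // => k _.
case: eqP => [e|_]; last by rewrite mulr0 mul0rn.
by move: (ltn_ord k); rewrite -e ltnS leqNgt h.
Qed.

Lemma bin_sum_ext (R : comNzRingType) (g : nat -> R) n i : (n <= i)%N ->
  \sum_(0 <= r < i.+1) ('C(n, r))%:R * g r = \sum_(0 <= r < n.+1) ('C(n, r))%:R * g r.
Proof.
move=> h; rewrite (big_cat_nat (n := n.+1)) //= [X in _ + X]big_nat_cond [X in _ + X]big1 ?addr0 // => r /andP[/andP[hr _] _].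
by rewrite bin_small // mul0r.
Qed.

Lemma newton (R : realFieldType) (i : nat) (k1 k2 : R) :
  \sum_(0 <= r < i.+1) ((r`!%:R)^-1 * bcoef i r k1) *:
      \prod_(0 <= t < r) ('X - (k2 + t%:R)%:P)
  = ('X + (k1 - k2)%:P) ^+ i.
Proof.
apply/eqP; rewrite -subr_eq0; apply/eqP.
apply: (@roots_geq_poly_eq0 _ _ [seq k2 + n%:R | n <- iota 0 i.+1]).
- rewrite all_map; apply/allP => n; rewrite mem_iota add0n => /andP[_ hn].
  rewrite /= /root hornerD hornerN horner_sum horner_exp hornerD hornerX hornerC.
  under eq_bigr => r _ do rewrite hornerZ horner_prod.
  under eq_bigr => r _ do under eq_bigr => t _ do rewrite hornerXsubC.
  have -> : \sum_(0 <= r < i.+1) (r`!%:R^-1 * bcoef i r k1) *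
        \prod_(0 <= t < r) (k2 + n%:R - (k2 + t%:R))
      = \sum_(0 <= r < i.+1) ('C(n, r))%:R * bf (fun t => (t%:R + k1) ^+ i) r.
    apply: eq_bigr => r _.
    have -> : \prod_(0 <= t < r) (k2 + n%:R - (k2 + t%:R)) = \prod_(0 <= t < r) (n%:R - t%:R : R).
      by apply: eq_bigr => t _; ring.
    rewrite ff_bin natrM /bcoef /bf.
    have hf : (r`!%:R : R) != 0 by rewrite pnatr_eq0 -lt0n fact_gt0.
    by field.
  rewrite bin_sum_ext // bf_inv.
  have -> : k2 + n%:R + (k1 - k2) = n%:R + k1 by ring.
  by rewrite subrr.
- rewrite map_inj_uniq ?iota_uniq // => x y /addrI /eqP.
  by rewrite eqr_nat => /eqP.
- rewrite size_map size_iota.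
  apply: (leq_trans (size_polyD _ _)); rewrite size_polyN geq_max; apply/andP; split.
    rewrite big_nat_cond.
    apply: (big_ind (fun p : {poly R} => (size p <= i.+1)%N)).
    + by rewrite size_poly0.
    + by move=> p q hp hq; apply: (leq_trans (size_polyD _ _)); rewrite geq_max hp hq.
    move=> r /andP[/andP[_ hr] _].
    apply: (leq_trans (size_scale_leq _ _)).
    by rewrite size_prod_XsubC size_iota subn0.
  apply: (leq_trans (size_poly_exp_leq _ _)).
  by rewrite size_XaddC mul1n.
Qed.

Lemma sum_drop (R : nmodType) (F : nat -> R) j n :
  (forall m, (m < j)%N -> F m = 0) -> \sum_(0 <= m < n) F m = \sum_(j <= m < n) F m.
Proof.
move=> H; case: (leqP j n) => h.
  rewrite (big_cat_nat (n := j)) //= big_nat_cond big1 ?add0r // => m /andP[/andP[_ hm] _].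
  exact: H.
rewrite [RHS]big_geq ?(ltnW h) //.
rewrite big_nat_cond big1 // => m /andP[/andP[_ hm] _].
by apply: H; apply: ltn_trans hm h.
Qed.

Lemma coef_F (R : realFieldType) (k2 : R) r j :
  (\prod_(0 <= t < r) ('X - (k2 + t%:R)%:P))`_j = ccoef r j k2.
Proof.
have -> : \prod_(0 <= t < r) ('X - (k2 + t%:R)%:P)
    = \prod_(0 <= t < r) (('X + (- k2)%:P) - t%:R) :> {poly R}.
  by apply: eq_bigr => t _; rewrite rmorphD rmorphN rmorph_nat; ring.
rewrite stirling_prod coef_sum /ccoef (sum_drop _ (j := j)).
  apply: eq_bigr => m _.
  by rewrite -(rmorph_int (@polyC R)) coefCM coef_XaddC_exp; ring.
move=> m hm; rewrite -(rmorph_int (@polyC R)) coefCM coef_XaddC_exp bin_small //.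
by rewrite mul0r mulr0.
Qed.

Theorem mainTheorem17 (R : realFieldType) (i j : nat) (k1 k2 : R) :
  \sum_(j <= r < i.+1) (r`!%:R)^-1 * bcoef i r k1 * ccoef r j k2
  = ('C(i, j))%:R * (k1 - k2) ^+ (i - j).
Proof.
rewrite -coef_XaddC_exp -newton coef_sum -(sum_drop _ (j := j)).
  by apply: eq_bigr => r _; rewrite coefZ coef_F.
by move=> m hm; rewrite /ccoef big_geq ?mulr0.
Qed.
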